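(* Let $Q$ be a quiver and $C\subseteq\Bbbk Q$ a subcoalgebra, with tail closure $T(C)$. Every finite dimensional right coideal of $T(C)$ is contained in the right coideal $\langle q_F\rangle^{T(C)}$ generated by an element of the form $q_F$, for some $n\ge 0$ and some finite independent set $F\subseteq M(T^n(C))$.
   Context: $\Bbbk$ is a field. Paths of $Q$ include trivial paths (vertices); concatenation $xy$ is defined when the target of $x$ is the source of $y$, extended bilinearly. The path coalgebra $\Bbbk Q$ has basis all paths, $\Delta(p)=\sum_{xy=p}x\otimes y$, $\varepsilon(p)=1$ if $p$ trivial and $0$ otherwise. A right coideal of a coalgebra $D$ is a subspace $I$ with $\Delta(I)\subseteq I\otimes D$; $\langle x\rangle^D$ is the smallest right coideal of $D$ containing $x$. A multipath is a nonzero linear combination of paths with common source $s(p)$ and common target $t(p)$; $M(D)$ is the set of multipaths in $D$; $F\subseteq M(D)$ is independent if it is linearly independent and $\langle x\rangle^D\cap F=\{x\}$ for each $x\in F$. Tail closure: for a subcoalgebra $D$ of a path coalgebra $\Bbbk R$, let $\overline{R}$ be obtained from $R$ by adding, for each finite independent $F=\{p_1,\dots,p_n\}\subseteq M(D)$, a new vertex $e_F$ and new arrows $\alpha_{i,F}:t(p_i)\to e_F$; put $q_F=\sum_i p_i\alpha_{i,F}\in\Bbbk\overline{R}$ and let $\overline{D}\subseteq\Bbbk\overline{R}$ be the subcoalgebra generated by $D$ and all $q_F$. Set $T^0(C)=C$, $T^{n+1}(C)=\overline{T^n(C)}$ (over the quivers $T^0(Q)=Q$, $T^{n+1}(Q)=\overline{T^n(Q)}$),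 and $T(C)=\bigcup_nT^n(C)$; thus for finite independent $F\subseteq M(T^n(C))$, $q_F\in T^{n+1}(C)\subseteq T(C)$. *)

(* Defs.v *)
From HB Require Import structures.
From mathcomp Require Import all_boot all_algebra.
From Stdlib Require Import ClassicalEpsilon List.

Set Implicit Arguments.
Unset Strict Implicit.
Unset Printing Implicit Defensive.

Import GRing.Theory.
Local Open Scope ring_scope.

Record quiver := Quiver {
  qV : Type; qA : Type; qsrc : qA -> qV; qtgt : qA -> qV }.

(* A raw path is a starting vertex and a list of arrows; the trivial path
   at v is (v, [::]). *)
Definition rpath (Q : quiver) : Type := (qV Q * list (qA Q))%type.

Fixpoint validl (Q : quiver) (v : qV Q) (l : list (qA Q)) : Prop :=
  match l with
  | [::] => True
  | a :: l' => qsrc a = v /\ validl (qtgt a) l'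
  end.

Definition valid (Q : quiver) (p : rpath Q) : Prop := validl p.1 p.2.
Definition psrc (Q : quiver) (p : rpath Q) : qV Q := p.1.
Definition ptgt (Q : quiver) (p : rpath Q) : qV Q :=
  fold_left (fun _ a => qtgt a) p.2 p.1.

(* The path coalgebra k Q: finitely supported functions on valid paths *)
Section PathCoalg.
Variable K : fieldType.
Variable Q : quiver.

Definition vec := rpath Q -> K.
Definition vzero : vec := fun _ => 0.
Definition vadd (x y : vec) : vec := fun p => x p + y p.
Definition vscale (c : K) (x : vec) : vec := fun p => c * x p.

Definition in_pc (x : vec) : Prop :=
  (exists s : list (rpath Q), forall p, x p <> 0 -> List.In p s) /\
  (forall p, x p <> 0 -> valid p).

(* comultiplication: coefficient of a (x) b in Delta(x) is the coefficient
   of the concatenation ab in x when ab is defined, 0 otherwise. *)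
Definition delta (x : vec) (a b : rpath Q) : K :=
  if excluded_middle_informative (valid a /\ valid b /\ ptgt a = psrc b)
  then x (a.1, a.2 ++ b.2) else 0.

Definition subspace (S : vec -> Prop) : Prop :=
  S vzero /\ (forall x y, S x -> S y -> S (vadd x y)) /\
  (forall c x, S x -> S (vscale c x)).

Definition in_tensor (I D : vec -> Prop) (phi : rpath Q -> rpath Q -> K) : Prop :=
  exists l : list (vec * vec),
    (forall z, List.In z l -> I z.1 /\ D z.2) /\
    (forall a b, phi a b = \sum_(z <- l) z.1 a * z.2 b).

Definition subcoalgebra (D : vec -> Prop) : Prop :=
  subspace D /\ (forall x, D x -> in_pc x) /\
  (forall x, D x -> in_tensor D D (delta x)).

Definition right_coideal (D I : vec -> Prop) : Prop :=
  subspace I /\ (forall x, I x -> D x) /\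
  (forall x, I x -> in_tensor I D (delta x)).

Definition gen_rcoideal (D : vec -> Prop) (x : vec) : vec -> Prop :=
  fun y => forall I, right_coideal D I -> I x -> I y.

Definition gen_subcoalg (S : vec -> Prop) : vec -> Prop :=
  fun y => forall E, subcoalgebra E -> (forall x, S x -> E x) -> E y.

Definition multipath (D : vec -> Prop) (x : vec) : Prop :=
  D x /\ x <> vzero /\
  (exists s, forall p, x p <> 0 -> psrc p = s) /\
  (exists t, forall p, x p <> 0 -> ptgt p = t).

Definition finite_set (F : vec -> Prop) : Prop :=
  exists s : list vec, forall x, F x -> List.In x s.

Definition lin_indep (F : vec -> Prop) : Prop :=
  forall l : list (K * vec), List.NoDup (map snd l) ->
    (forall z, List.In z l -> F z.2) ->
    (forall p, \sum_(z <- l) z.1 * z.2 p = 0) ->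
    forall z, List.In z l -> z.1 = 0.

Definition independent (D : vec -> Prop) (F : vec -> Prop) : Prop :=
  (forall x, F x -> multipath D x) /\ lin_indep F /\
  (forall x y, F x -> F y -> gen_rcoideal D x y -> y = x).

Definition finite_dim (I : vec -> Prop) : Prop :=
  exists B : list vec, forall y, I y ->
    exists cl : list (K * vec), (forall z, List.In z cl -> List.In z.2 B) /\
      (forall p, y p = \sum_(z <- cl) z.1 * z.2 p).

End PathCoalg.

Section Bar.
Variable K : fieldType.
Variable Q : quiver.
Variable D : vec K Q -> Prop.

(* index of the new vertices e_F: finite independent F subset of M(D) *)
Record fidx := FIdx {
  fset : vec K Q -> Prop;
  fset_fin : finite_set fset;
  fset_ind : independent D fset }.

(* index of the new arrows alpha_{p,F}, p in F *)
Record aidx := AIdx { aF : fidx; ap : vec K Q; ap_in : fset aF ap }.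

Definition mp_tgt (x : vec K Q) (H : multipath D x) : qV Q :=
  proj1_sig (constructive_indefinite_description _ (proj2 (proj2 (proj2 H)))).

Definition aidx_src (al : aidx) : qV Q :=
  mp_tgt (proj1 (fset_ind (aF al)) (ap al) (ap_in al)).

Definition barQ : quiver :=
  {| qV := (qV Q + fidx)%type; qA := (qA Q + aidx)%type;
     qsrc := fun a => match a with inl a' => inl (qsrc a')
                                 | inr al => inl (aidx_src al) end;
     qtgt := fun a => match a with inl a' => inl (qtgt a')
                                 | inr al => inr (aF al) end |}.

Fixpoint unl (A B : Type) (l : list (A + B)) : option (list A) :=
  match l with
  | [::] => Some [::]
  | inl a :: l' => omap (cons a) (unl l')
  | inr _ :: _ => None
  end.

Definition embf (x : vec K Q) : vec K barQ :=
  fun p => match p.1, unl p.2 with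
           | inl v, Some l => x (v, l)
           | _, _ => 0 end.

(* q_F = sum_{p in F} p alpha_{p,F} *)
Definition qF (F : fidx) : vec K barQ :=
  fun p => match rev p.2 with
           | inr al :: rest =>
               if excluded_middle_informative (aF al = F) then
                 match p.1, unl (rev rest) with
                 | inl v, Some l => ap al (v, l)
                 | _, _ => 0 end
               else 0
           | _ => 0 end.

Definition barD : vec K barQ -> Prop :=
  gen_subcoalg (fun y => (exists x, D x /\ y = embf x) \/ exists F, y = qF F).

End Bar.

Record stage (K : fieldType) := Stage { sQ : quiver; sD : vec K sQ -> Prop }.
Arguments sD {K} s _.
Arguments sQ {K} s.

Section Tower.
Variable K : fieldType.
Variable Q : quiver.
Variable C : vec K Q -> Prop.

Fixpoint T (n : nat) : stage K :=
  match n with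
  | 0 => Stage C
  | S m => @Stage K (barQ (@sD K (T m))) (@barD K (sQ (T m)) (@sD K (T m)))
  end.

(* vertices / arrows first appearing at stage n *)
Definition newV (n : nat) : Type :=
  match n with 0 => qV Q | S m => fidx (sD (T m)) end.
Definition newA (n : nat) : Type :=
  match n with 0 => qA Q | S m => aidx (sD (T m)) end.

Definition TV : Type := {n : nat & newV n}.
Definition TA : Type := {n : nat & newA n}.

Fixpoint liftV (n : nat) : qV (sQ (T n)) -> TV :=
  match n return qV (sQ (T n)) -> TV with
  | 0 => fun v => existT newV 0 v
  | S m => fun v => match v with
                    | inl v' => @liftV m v'
                    | inr F => existT newV (S m) F end
  end.

Fixpoint liftA (n : nat) : qA (sQ (T n)) -> TA :=
  match n return qA (sQ (T n)) -> TA with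
  | 0 => fun a => existT newA 0 a
  | S m => fun a => match a with
                    | inl a' => @liftA m a'
                    | inr al => existT newA (S m) al end
  end.

Definition injA (n : nat) : newA n -> qA (sQ (T n)) :=
  match n return newA n -> qA (sQ (T n)) with
  | 0 => fun a => a
  | S m => fun a => inr a
  end.

(* the quiver T(Q) = union of the T^n(Q) *)
Definition TQ : quiver :=
  {| qV := TV; qA := TA;
     qsrc := fun a => liftV (qsrc (injA (projT2 a)));
     qtgt := fun a => liftV (qtgt (injA (projT2 a))) |}.

Definition liftP (n : nat) (p : rpath (sQ (T n))) : rpath TQ :=
  (liftV p.1, map (@liftA n) p.2).

Definition liftf (n : nat) (x : vec K (sQ (T n))) : vec K TQ :=
  fun p => match excluded_middle_informative (exists p', p = liftP p') with
           | left H => x (proj1_sig (constructive_indefinite_description _ H))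
           | right _ => 0 end.

Definition TC : vec K TQ -> Prop :=
  fun y => exists n x, sD (T n) x /\ y = liftf x.

End Tower.

(* Main.v *)
Require Import Defs.
From HB Require Import structures.
From mathcomp Require Import all_boot all_algebra.
From mathcomp Require Import ring.
From Stdlib Require Import List ClassicalEpsilon Classical ProofIrrelevance FunctionalExtensionality Lia.

Set Implicit Arguments.
Unset Strict Implicit.
Unset Printing Implicit Defensive.
Import GRing.Theory.
Local Open Scope ring_scope.

Section Gen.
Variable K : fieldType.

Definition comb (P : Type) (cl : list (K * (P -> K))) : P -> K :=
  fun p => \sum_(z <- cl) z.1 * z.2 p.

Lemma sub_comb (P : Type) (S : (P -> K) -> Prop) cl :
  S (fun _ => 0) -> (forall x y, S x -> S y -> S (fun p => x p + y p)) ->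
  (forall c x, S x -> S (fun p => c * x p)) ->
  (forall z, In z cl -> S z.2) -> S (comb cl).
Proof.
move=> H0 Hadd Hsc; elim: cl => [|z cl IH] Hin.
  have -> : comb [::] = (fun _ : P => 0) by apply: functional_extensionality => p; rewrite /comb big_nil.
  done.
have -> : comb (z :: cl) = (fun p => z.1 * z.2 p + comb cl p).
  by apply: functional_extensionality => p; rewrite /comb big_cons.
apply: Hadd; first by apply: Hsc; apply: Hin; left.
by apply: IH => z' Hz'; apply: Hin; right.
Qed.

Lemma skeleton (P : Type) (phi : P -> P -> K) (A : list P) :
  (forall a b, phi a b <> 0 -> In a A) ->
  exists l : list (K * P * P), forall a b,
    phi a b = \sum_(z <- l) z.1.1 * phi a z.1.2 * phi z.2 b.
Proof.
elim: A phi => [|q A IH] phi Hs.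
  by exists [::] => a b; rewrite big_nil; apply/eqP/negPn/negP => /eqP /Hs.
case: (classic (exists p, phi q p <> 0)) => [[p Hp]|Hn].
  pose d := phi q p.
  pose phi' := fun a b => phi a b - phi a p * phi q b / d.
  have Hs' : forall a b, phi' a b <> 0 -> In a A.
    move=> a b Hab; have [E|Hne] := classic (a = q).
      by subst a; exfalso; apply: Hab; rewrite /phi' /d; field; apply/eqP.
    have : In a (q :: A).
      have [Hb|Hb] := eqVneq (phi a b) 0; last by move/eqP: Hb => Hb; exact: (Hs a b Hb).
      have [Hap|Hap] := eqVneq (phi a p) 0.
        by exfalso; apply: Hab; rewrite /phi' Hb Hap !mul0r subrr.
      by move/eqP: Hap => Hap; exact: (Hs a p Hap).
    by case=> [E|//]; exfalso; apply: Hne.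
  have [l Hl] := IH phi' Hs'.
  pose f := fun z : K * P * P =>
    [:: (z.1.1, z.1.2, z.2);
        (- z.1.1 * phi z.2 p / d, z.1.2, q);
        (- z.1.1 * phi q z.1.2 / d, p, z.2);
        (z.1.1 * phi q z.1.2 * phi z.2 p / (d * d), p, q)].
  exists ((d^-1, p, q) :: flatten (map f l)) => a b.
  rewrite big_cons big_flatten /= big_map.
  have -> : phi a b = phi' a b + phi a p * phi q b / d by rewrite /phi' subrK.
  rewrite Hl addrC; congr (_ + _); first by rewrite /=; field; apply/eqP.
  apply: eq_bigr => z _; rewrite !big_cons big_nil /= /phi'.
  field; apply/eqP; exact Hp.
have Hs' : forall a b, phi a b <> 0 -> In a A.
  move=> a b Hab; case: (Hs a b Hab) => [E|//]; subst a.
  by exfalso; apply: Hn; exists b.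
exact: IH.
Qed.

Variable Q : quiver.
Local Notation vec := (vec K Q).

Lemma validl_app (v : qV Q) l1 l2 :
  validl v (l1 ++ l2) <-> validl v l1 /\ validl (fold_left (fun _ a => qtgt a) l1 v) l2.
Proof.
elim: l1 v => [|a l1 IH] v /=; first by split; [move=> H; split | case].
rewrite IH; split; [case=> ? [] ? ?|case=> [[] ? ? ?]]; by repeat split.
Qed.

Lemma delta_E (x : vec) a b : (forall p, x p <> 0 -> valid p) ->
  delta x a b = if excluded_middle_informative (ptgt a = psrc b)
                then x (a.1, a.2 ++ b.2) else 0.
Proof.
move=> Hv; rewrite /delta.
case: excluded_middle_informative => [[Ha [Hb E]]|Hn];
case: excluded_middle_informative => //= E'.
have [//|Hx] := eqVneq (x (a.1, a.2 ++ b.2)) 0.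
exfalso; apply: Hn; move/eqP: Hx => /Hv; rewrite /valid /= validl_app => -[H1 H2].
split => //; split => //; rewrite /valid; have <- : ptgt a = b.1 := E'; exact: H2.
Qed.

Lemma delta_valid (x : vec) a b : delta x a b <> 0 -> valid a /\ valid b.
Proof. by rewrite /delta; case: excluded_middle_informative => [[? []]|] //. Qed.

Definition subsp (S : vec -> Prop) := subspace S.

Lemma subsp_comb (S : vec -> Prop) cl : subspace S -> (forall z, In z cl -> S z.2) -> S (comb cl).
Proof.
case=> H0 [Ha Hs]; apply: sub_comb => //.
Qed.

Lemma tensor_cols (L R : vec -> Prop) phi : subspace L -> in_tensor L R phi ->
  forall p, L (fun a => phi a p).
Proof.
move=> HL [l [Hl E]] p.
have -> : (fun a => phi a p) = comb (map (fun z => (z.2 p, z.1)) l).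
  apply: functional_extensionality => a; rewrite E /comb big_map.
  by apply: eq_bigr => z _; rewrite mulrC.
apply: subsp_comb => // z /in_map_iff [z' [<- Hz']] /=; exact: (proj1 (Hl _ Hz')).
Qed.

Lemma tensor_rows (L R : vec -> Prop) phi : subspace R -> in_tensor L R phi ->
  forall q, R (fun b => phi q b).
Proof.
move=> HR [l [Hl E]] q.
have -> : (fun b => phi q b) = comb (map (fun z => (z.1 q, z.2)) l).
  by apply: functional_extensionality => a; rewrite E /comb big_map.
apply: subsp_comb => // z /in_map_iff [z' [<- Hz']] /=; exact: (proj2 (Hl _ Hz')).
Qed.

Lemma tensor_of (L R : vec -> Prop) phi A : subspace L -> subspace R ->
  (forall a b, phi a b <> 0 -> In a A) ->
  (forall p, L (fun a => phi a p)) -> (forall q, R (fun b => phi q b)) ->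
  in_tensor L R phi.
Proof.
move=> [L0 [La Ls]] HR Hs HL HRr.
have [l Hl] := skeleton Hs.
exists (map (fun z => (vscale z.1.1 (fun a => phi a z.1.2), fun b => phi z.2 b)) l).
split.
  move=> z /in_map_iff [z' [<- _]] /=; split; [exact: Ls|exact: HRr].
by move=> a b; rewrite Hl big_map.
Qed.

End Gen.


Lemma firstn_len_app (A : Type) (l1 l2 : list A) : firstn (length l1) (l1 ++ l2) = l1.
Proof. by elim: l1 => //= a l IH; rewrite IH. Qed.
Lemma skipn_len_app (A : Type) (l1 l2 : list A) : skipn (length l1) (l1 ++ l2) = l2.
Proof. by elim: l1. Qed.

Section Gen2.
Variable K : fieldType.
Variable Q : quiver.
Local Notation vec := (vec K Q).

Definition prefs (S : list (rpath Q)) : list (rpath Q) :=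
  flat_map (fun s => map (fun k => (s.1, firstn k s.2)) (seq 0 (length s.2).+1)) S.

Lemma delta_rowfin (x : vec) S : (forall p, x p <> 0 -> In p S) ->
  forall a b, delta x a b <> 0 -> In a (prefs S).
Proof.
move=> HS a b; rewrite /delta; case: excluded_middle_informative => //= _ /HS Hin.
apply/in_flat_map; exists (a.1, a.2 ++ b.2); split => //.
apply in_map_iff; exists (length a.2); rewrite firstn_len_app; split; first by case: a {Hin}.
apply/in_seq; rewrite length_app; lia.
Qed.

Lemma pc_subspace : subspace (@in_pc K Q).
Proof.
split; first by split; [exists [::] | ] => p; rewrite /vzero; case/eqP; rewrite eqxx.
split.
  move=> x y [[Sx Hx] Vx] [[Sy Hy] Vy]; split.
    exists (Sx ++ Sy) => p; rewrite /vadd => H; apply/in_or_app.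
    have [Hx0|Hx0] := eqVneq (x p) 0.
      by right; apply: Hy => Hy0; apply: H; rewrite Hx0 Hy0 addr0.
    by left; apply: Hx; apply/eqP.
  move=> p; rewrite /vadd => H.
  have [Hx0|Hx0] := eqVneq (x p) 0.
    by apply: Vy => Hy0; apply: H; rewrite Hx0 Hy0 addr0.
  by apply: Vx; apply/eqP.
move=> c x [[Sx Hx] Vx]; split.
  by exists Sx => p; rewrite /vscale => H; apply: Hx => H0; apply: H; rewrite H0 mulr0.
by move=> p; rewrite /vscale => H; apply: Vx => H0; apply: H; rewrite H0 mulr0.
Qed.

Lemma pc_subcoalg : subcoalgebra (@in_pc K Q).
Proof.
split; first exact: pc_subspace.
split; first by [].
move=> x [[S HS] Hv].
apply: (tensor_of pc_subspace pc_subspace (delta_rowfin HS)).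
  move=> p; split.
    by exists (prefs S) => a Ha; exact: (delta_rowfin HS Ha).
  by move=> a /delta_valid [].
move=> q; split.
  exists (map (fun s => (ptgt q, skipn (length q.2) s.2)) S) => b.
  rewrite /delta; case: excluded_middle_informative => //= -[_ [_ E]] /HS Hin.
  apply in_map_iff; exists (q.1, q.2 ++ b.2); split => //=.
  by rewrite skipn_len_app E; case: b {E Hin}.
by move=> b /delta_valid [].
Qed.

Definition good (D : vec -> Prop) : Prop :=
  subspace D /\ (forall x, D x -> in_pc x) /\
  (forall x, D x -> forall p, D (fun a => delta x a p)) /\
  (forall x, D x -> forall q, D (fun b => delta x q b)).

Lemma subcoalg_good D : subcoalgebra D -> good D.
Proof.
move=> [HS [Hpc Ht]]; split=> //; split=> //; split.
  by move=> x Hx p; apply: (tensor_cols HS (Ht x Hx)).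
by move=> x Hx q; apply: (tensor_rows HS (Ht x Hx)).
Qed.

Lemma gen_good (S : vec -> Prop) : (forall x, S x -> in_pc x) -> good (gen_subcoalg S).
Proof.
move=> HS; split; last split; last split.
- split; first by move=> E [[H0 _] _] _.
  split.
    by move=> x y Hx Hy E HE HSE; case: (HE) => [[_ [Ha _]] _]; apply: Ha; [apply: Hx|apply: Hy].
  by move=> c x Hx E HE HSE; case: (HE) => [[_ [_ Hs]] _]; apply: Hs; apply: Hx.
- by move=> x Hx; apply: (Hx _ pc_subcoalg HS).
- move=> x Hx p E HE HSE; case: (subcoalg_good HE) => _ [_ [Hc _]].
  by apply: Hc; apply: Hx.
- move=> x Hx p E HE HSE; case: (subcoalg_good HE) => _ [_ [_ Hr]].
  by apply: Hr; apply: Hx.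
Qed.

Definition comp (s t : qV Q) (x : vec) : vec :=
  fun a => if excluded_middle_informative (psrc a = s /\ ptgt a = t) then x a else 0.

Lemma comp_in D x s t : good D -> D x -> D (comp s t x).
Proof.
move=> [HS [Hpc [Hc Hr]]] Hx.
pose c := fun a => delta x a (t, [::]).
have Hcv : forall p, c p <> 0 -> valid p by move=> p /delta_valid [].
have -> : comp s t x = fun b => delta c (s, [::]) b.
  apply: functional_extensionality => b.
  have Hxv : forall p, x p <> 0 -> valid p by case: (Hpc x Hx).
  case: b => b1 b2.
  rewrite (delta_E _ _ Hcv) /c (delta_E _ _ Hxv) /comp /psrc /ptgt /= app_nil_r.
  destruct (excluded_middle_informative (s = b1)) as [E|N] => /=.
    subst b1.
    do 2 (case: excluded_middle_informative => /= ?); try done; exfalso; intuition.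
  case: excluded_middle_informative => [[E' E2]|N'] //=.
  by exfalso; apply: N; rewrite E'.
by apply: Hr; apply: Hc.
Qed.

Definition inspan (G : list vec) (y : vec) : Prop :=
  exists cl : list (K * vec), (forall z, In z cl -> In z.2 G) /\
    (forall p, y p = \sum_(z <- cl) z.1 * z.2 p).

Lemma decompose D : good D -> forall S x, D x -> (forall p, x p <> 0 -> In p S) ->
  exists G, (forall g, In g G -> multipath D g) /\ inspan G x.
Proof.
move=> HD; case: (HD) => [[H0 [Ha Hs]] [Hpc [Hc Hr]]].
elim=> [|p S IH] x Hx HS.
  exists [::]; split => //; exists [::]; split => // q; rewrite big_nil.
  by apply/eqP/negPn/negP => /eqP /HS.
pose c := comp (psrc p) (ptgt p) x.
pose r := vadd x (vscale (-1) c).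
have Hcin : D c by apply: comp_in.
have Hrin : D r by apply: Ha => //; apply: Hs.
have HrS : forall a, r a <> 0 -> In a S.
  move=> a; rewrite /r /vadd /vscale /c /comp.
  case: excluded_middle_informative => [H|Hn]; first by rewrite mulN1r subrr => Hz; exfalso; exact: Hz.
  rewrite mulr0 addr0 => /HS [E|//]; subst a; exfalso; exact: Hn.
have [G' [HG' [cl' [Hcl' Ecl']]]] := IH r Hrin HrS.
have [Hc0|Hc0] := classic (c = @vzero K Q).
  exists G'; split => //; exists cl'; split => // q; rewrite -Ecl' /r /vadd /vscale Hc0.
  by rewrite /vzero mulr0 addr0.
exists (c :: G'); split.
  move=> g [<-|/HG' //]; split => //; split => //; split.
    by exists (psrc p) => a; rewrite /c /comp; case: excluded_middle_informative => // -[].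
  by exists (ptgt p) => a; rewrite /c /comp; case: excluded_middle_informative => // -[].
exists ((1, c) :: cl'); split; first by move=> z [<-|/Hcl' ?]; [left|right].
by move=> q; rewrite big_cons -Ecl' /r /vadd /vscale /=; ring.
Qed.

End Gen2.


Section Gen3.
Variable K : fieldType.
Variable Q : quiver.
Local Notation vec := (vec K Q).

Lemma inspan_subspace (G : list vec) : subspace (inspan G).
Proof.
split; first by exists [::]; split => // p; rewrite big_nil.
split.
  move=> x y [cx [Hcx Ex]] [cy [Hcy Ey]]; exists (cx ++ cy); split.
    by move=> z Hz; case: (in_app_or _ _ _ Hz) => [/Hcx|/Hcy].
  by move=> p; rewrite /vadd Ex Ey big_cat.
move=> c x [cx [Hcx Ex]]; exists (map (fun z => (c * z.1, z.2)) cx); split.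
  by move=> z /in_map_iff [z' [<- /Hcx]].
by move=> p; rewrite /vscale Ex big_map mulr_sumr; apply: eq_bigr => z _; rewrite mulrA.
Qed.

Lemma inspan_mem (G : list vec) g : In g G -> inspan G g.
Proof. by move=> Hg; exists [:: (1, g)]; split=> [z [<-|]//|p]; rewrite big_cons big_nil mul1r addr0. Qed.

Lemma sub_inspan (S : vec -> Prop) G y : subspace S -> (forall g, In g G -> S g) -> inspan G y -> S y.
Proof.
move=> HS HG [cl [Hcl E]].
have -> : y = comb cl by apply: functional_extensionality => p; rewrite E.
by apply: subsp_comb => // z /Hcl /HG.
Qed.

Lemma inspan_trans (G H : list vec) y : (forall g, In g G -> inspan H g) -> inspan G y -> inspan H y.
Proof. move=> HG; apply: sub_inspan => //; exact: inspan_subspace. Qed.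

Lemma inspan_incl (G H : list vec) y : (forall g, In g G -> In g H) -> inspan G y -> inspan H y.
Proof. by move=> HG; apply: inspan_trans => g /HG /inspan_mem. Qed.

Lemma inspan_split (b : vec) B y : inspan (b :: B) y -> exists c, inspan B (fun p => y p - c * b p).
Proof.
move=> [cl [Hcl E]].
have -> : y = comb cl by apply: functional_extensionality => p; rewrite E.
elim: cl Hcl {E} => [|z cl IH] Hcl.
  by exists 0; exists [::]; split => // p; rewrite /comb !big_nil mul0r subrr.
have [c [cl' [Hcl' E']]] : exists c, inspan B (fun p => comb cl p - c * b p).
  by apply: IH => z' Hz'; apply: Hcl; right.
case: (Hcl z (or_introl erefl)) => [Eb|Hz].
  exists (c + z.1); exists cl'; split => // p; rewrite /comb big_cons -/(comb cl p) -E' -Eb /=; ring.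
exists c; exists (z :: cl'); split; first by move=> z' [<-|/Hcl'].
by move=> p; rewrite /comb !big_cons -/(comb cl p) -E' /=; ring.
Qed.

Lemma span_extract (B : list vec) : forall W : vec -> Prop, subspace W ->
  (forall y, W y -> inspan B y) ->
  exists L, (forall x, In x L -> W x) /\ forall y, W y -> inspan L y.
Proof.
elim: B => [|b B IH] W HW HB.
  exists [::]; split => //; move=> y /HB [cl [Hcl E]]; exists [::]; split => // p.
have [Hall|Hex] := classic (forall y, W y -> inspan B y); first exact: IH.
have [y0 [Wy0 Ny0]] : exists y0, W y0 /\ ~ inspan B y0.
  by apply: NNPP => Hn; apply: Hex => y Hy; apply: NNPP => Hn'; apply: Hn; exists y.
pose W' := fun y => W y /\ inspan B y.
have HW' : subspace W'.
  case: HW => [H0 [Ha Hs]]; case: (inspan_subspace B) => [S0 [Sa Ss]].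
  split; first by split. split.
    by move=> x y [? ?] [? ?]; split; [apply: Ha|apply: Sa].
  by move=> c x [? ?]; split; [apply: Hs|apply: Ss].
have [L [HL HLs]] := IH W' HW' (fun y Hy => proj2 Hy).
exists (y0 :: L); split; first by move=> x [<-|/HL []].
move=> y Wy.
have [c0 Hc0] := inspan_split (HB _ Wy0).
have [c Hc] := inspan_split (HB _ Wy).
have c0n : c0 != 0.
  apply/eqP => E0; apply: Ny0.
  have -> : y0 = (fun p => y0 p - c0 * b p) by apply: functional_extensionality => p; rewrite E0 mul0r subr0.
  exact: Hc0.
pose w := fun p => y p - c / c0 * y0 p.
have Ww : W' w.
  case: HW => [H0 [Ha Hs]]; case: (inspan_subspace B) => [S0 [Sa Ss]].
  split.
    have -> : w = vadd y (vscale (- (c / c0)) y0) by apply: functional_extensionality => p; rewrite /w /vadd /vscale mulNr.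
    by apply: Ha => //; apply: Hs.
  have -> : w = vadd (fun p => y p - c * b p) (vscale (- (c / c0)) (fun p => y0 p - c0 * b p)).
    apply: functional_extensionality => p; rewrite /w /vadd /vscale; field; exact: c0n.
  by apply: Sa => //; apply: Ss.
have Hw := HLs _ Ww.
case: (inspan_subspace (y0 :: L)) => [S0 [Sa Ss]].
have -> : y = vadd w (vscale (c / c0) y0).
  by apply: functional_extensionality => p; rewrite /w /vadd /vscale subrK.
apply: Sa; first by apply: (inspan_incl _ Hw) => g Hg; right.
by apply: Ss; apply: inspan_mem; left.
Qed.

Lemma lin_indep_nil : lin_indep (fun x : vec => In x [::]).
Proof. by move=> l _ Hl _ z Hz; case: (Hl z Hz). Qed.

Lemma lin_indep_cons (g : vec) G : lin_indep (fun x => In x G) -> ~ inspan G g ->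
  lin_indep (fun x => In x (g :: G)).
Proof.
move=> HG Ng l Hnd Hl Hsum.
have [[z0 [Hz0 E0]]|Hno] := classic (exists z0, In z0 l /\ z0.2 = g).
  have [l1 [l2 El]] := in_split _ _ Hz0.
  subst l.
  have Hnd' : NoDup (map snd (l1 ++ l2)) by move: Hnd; rewrite !map_app /= => Hnd; exact: (NoDup_remove_1 _ _ _ Hnd).
  have Hnot : ~ In g (map snd (l1 ++ l2)) by move: Hnd; rewrite !map_app /= E0 => Hnd; exact: (NoDup_remove_2 _ _ _ Hnd).
  have Hin' : forall z, In z (l1 ++ l2) -> In z.2 G.
    move=> z Hz.
    have Hz' : In z (l1 ++ z0 :: l2).
      by case: (in_app_or _ _ _ Hz) => H; apply: in_or_app; [left|right; right].
    case: (Hl z Hz') => // Eg; exfalso; apply: Hnot; rewrite Eg; exact: in_map.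
  have Hs' : forall p, z0.1 * g p + \sum_(z <- l1 ++ l2) z.1 * z.2 p = 0.
    move=> p; rewrite -[RHS](Hsum p) !big_cat big_cons /= E0; ring.
  have Ez0 : z0.1 = 0.
    apply/eqP/negPn/negP => Hn; apply: Ng.
    exists (map (fun z => (- z0.1^-1 * z.1, z.2)) (l1 ++ l2)); split.
      by move=> z /in_map_iff [z' [<- /Hin']].
    move=> p; rewrite big_map.
    have -> : g p = - z0.1^-1 * \sum_(z <- l1 ++ l2) z.1 * z.2 p.
      have := Hs' p => Hp.
      apply: (mulfI Hn); rewrite mulrA mulrN mulfV // mulN1r.
      by apply/eqP; rewrite -addr_eq0 addrC; apply/eqP; rewrite addrC.
    by rewrite mulr_sumr; apply: eq_bigr => z _; rewrite mulrA.
  have Hz : forall z, In z (l1 ++ l2) -> z.1 = 0.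
    apply: HG => // p; have := Hs' p; rewrite Ez0 mul0r add0r //.
  move=> z Hz0'; case: (in_app_or _ _ _ Hz0') => [H|[<-|H]] //; apply: Hz; apply: in_or_app; by [left|right].
apply: HG => // z Hz.
  by case: (Hl z Hz) => // Eg; exfalso; apply: Hno; exists z.
Qed.

Lemma indep_extract (G0 : list vec) : exists G1, (forall x, In x G1 -> In x G0) /\
  lin_indep (fun x => In x G1) /\ forall g, In g G0 -> inspan G1 g.
Proof.
elim: G0 => [|g G0 [G1 [H1 [H2 H3]]]].
  by exists [::]; split => //; split => //; exact: lin_indep_nil.
have [Hs|Hn] := classic (inspan G1 g).
  exists G1; split; first by move=> x /H1; right.
  by split => // h [<-|/H3].
exists (g :: G1); split; first by move=> x [<-|/H1]; [left|right].
split; first exact: lin_indep_cons.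
move=> h [<-|/H3 Hh]; first by apply: inspan_mem; left.
by apply: (inspan_incl _ Hh) => x Hx; right.
Qed.

End Gen3.


Section BarLemmas.
Variable K : fieldType.
Variable Q : quiver.
Variable D : vec K Q -> Prop.
Local Notation BQ := (barQ D).
Local Notation emb := (@embf K Q D).

Definition piota (p : rpath Q) : rpath BQ := (inl p.1, map inl p.2).

Lemma fold_inl (l : list (qA Q)) (v : qV Q) :
  fold_left (fun _ a => @qtgt BQ a) (map inl l) (inl v) = inl (fold_left (fun _ a => qtgt a) l v).
Proof. by elim: l v => //= a l IH v; rewrite IH. Qed.

Lemma ptgt_iota p : ptgt (piota p) = inl (ptgt p).
Proof. exact: fold_inl. Qed.

Lemma validl_inl (l : list (qA Q)) (v : qV Q) : @validl BQ (inl v) (map inl l) <-> validl v l.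
Proof.
elim: l v => //= a l IH v; rewrite IH; split; case=> E H; split => //; first by case: E.
by rewrite E.
Qed.

Lemma unl_map (l : list (qA Q)) : @unl (qA Q) (aidx D) (map inl l) = Some l.
Proof. by elim: l => //= a l ->. Qed.

Lemma unl_some (l' : list (qA Q + aidx D)) l : unl l' = Some l -> l' = map inl l.
Proof.
elim: l' l => [|[a|al] l' IH] l /=; first by case=> <-.
  by case E: (unl l') => [l2|] //= [<-]; rewrite (IH _ E).
by [].
Qed.

Lemma embf_iota x p : emb x (piota p) = x p.
Proof. by case: p => v l; rewrite /embf /= unl_map. Qed.

Lemma embf_supp x p : emb x p <> 0 -> exists r, p = piota r /\ x r <> 0.
Proof.
case: p => [[v|e] l'] //=; rewrite /embf /=.
case E: (unl l') => [l|] // H; exists (v, l); split => //.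
by rewrite /piota /= -(unl_some E).
Qed.

Lemma embf_pc x : in_pc x -> in_pc (emb x).
Proof.
move=> [[S HS] Hv]; split.
  exists (map piota S) => p /embf_supp [r [-> Hr]]; apply: in_map; exact: HS.
move=> p /embf_supp [r [-> Hr]]; rewrite /valid /=; apply/validl_inl; exact: Hv.
Qed.

Lemma mp_tgt_spec x (H : multipath D x) p : x p <> 0 -> ptgt p = mp_tgt H.
Proof.
rewrite /mp_tgt; case: constructive_indefinite_description => t Ht /=; exact: Ht.
Qed.

Lemma qF_supp (F : fidx D) p : qF F p <> 0 ->
  exists al v l, p = (inl v, map inl l ++ [:: inr al]) /\ aF al = F /\ ap al (v, l) <> 0.
Proof.
case: p => p1 p2; rewrite /qF /=.
case E: (rev p2) => [|[a|al] rest] //.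
case: excluded_middle_informative => //= EF.
case: p1 => [v|e] //.
case E2: (unl (rev rest)) => [l|] // H.
exists al, v, l; split => //.
have -> : p2 = rev (rev p2) by rewrite rev_involutive.
by rewrite E /= (unl_some E2).
Qed.

Lemma qF_pc (F : fidx D) : (forall x, D x -> in_pc x) -> in_pc (qF F).
Proof.
move=> HD.
have Hpc : forall f, fset F f -> in_pc f.
  by move=> f h; apply: HD; case: (proj1 (fset_ind F) f h).
case: (fset_fin F) => sF HsF.
pose sup := fun f (h : fset F f) => proj1_sig (constructive_indefinite_description _ (proj1 (Hpc f h))).
have Hsup : forall f (h : fset F f) s, f s <> 0 -> In s (sup f h).
  by move=> f h s; rewrite /sup; case: constructive_indefinite_description => S HS /=; apply: HS.
split.
  exists (flat_map (fun f => match excluded_middle_informative (fset F f) with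
            | left h => map (fun s => (inl s.1, map inl s.2 ++ [:: inr (AIdx h)])) (sup f h)
            | right _ => [::] end) sF).
  move=> p /qF_supp [[F' f h'] [v [l [-> [/= EF Hf]]]]].
  subst F'.
  apply/in_flat_map; exists f; split; first exact: HsF.
  case: excluded_middle_informative => [h|n]; last by exfalso; apply: n.
  rewrite (proof_irrelevance _ h' h).
  apply in_map_iff; exists (v, l); split => //; exact: Hsup.
move=> p /qF_supp [[F' f h'] [v [l [-> [/= EF Hf]]]]].
subst F'.
have Hm : multipath D f := proj1 (fset_ind F) f h'.
have Hvl : valid (v, l) by case: (Hpc f h') => _; apply.
rewrite /valid /= validl_app; split; first by apply/validl_inl.
rewrite fold_inl /=; split => //.
rewrite /aidx_src /=.
congr inl; have := mp_tgt_spec (proj1 (fset_ind F) f h') Hf; rewrite /ptgt /= => -> //.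
Qed.

Lemma embf_mp x : multipath D x -> multipath (@barD K Q D) (emb x).
Proof.
move=> [Dx [Nx [[s Hs] [t Ht]]]]; split.
  by move=> E HE HSE; apply: HSE; left; exists x.
split.
  move=> E0; apply: Nx; apply: functional_extensionality => p.
  by rewrite /vzero -(embf_iota x p) E0.
split.
  by exists (inl s) => p /embf_supp [r [-> Hr]]; rewrite /psrc /= -(Hs r Hr).
by exists (inl t) => p /embf_supp [r [-> Hr]]; rewrite ptgt_iota (Ht r Hr).
Qed.

End BarLemmas.


Section TowerLemmas.
Variable K : fieldType.
Variable Q : quiver.
Variable C : vec K Q -> Prop.
Hypothesis HC : subcoalgebra C.

Local Notation TT := (@T K Q C).
Local Notation DD n := (sD (TT n)).
Local Notation QQ n := (sQ (TT n)).
Local Notation TQ := (@TQ K Q C).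

Lemma stage_good n : good (DD n).
Proof.
elim: n => [|n IH] /=; first exact: subcoalg_good.
apply: gen_good => y [[x [Dx ->]]|[F ->]].
  by apply: embf_pc; case: IH => _ [H _]; apply: H.
by apply: qF_pc; case: IH => _ [H _].
Qed.

Lemma liftV_idx n (v : qV (QQ n)) : (projT1 (@liftV K Q C n v) <= n)%N.
Proof.
elim: n v => [|n IH] //= [v|F] //=.
by apply: leq_trans (IH v) _.
Qed.

Lemma liftA_idx n (a : qA (QQ n)) : (projT1 (@liftA K Q C n a) <= n)%N.
Proof.
elim: n a => [|n IH] //= [a|al] //=.
by apply: leq_trans (IH a) _.
Qed.

Lemma liftV_inj n : injective (@liftV K Q C n).
Proof.
elim: n => [|n IH] /=.
  by move=> v1 v2 E; apply: (Eqdep_dec.inj_pair2_eq_dec _ PeanoNat.Nat.eq_dec _ _ _ _ E).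
move=> [v1|F1] [v2|F2] E.
- by rewrite (IH _ _ E).
- by have := liftV_idx v1; rewrite E /= ltnn.
- by have := liftV_idx v2; rewrite -E /= ltnn.
- by rewrite (Eqdep_dec.inj_pair2_eq_dec _ PeanoNat.Nat.eq_dec _ _ _ _ E).
Qed.

Lemma liftA_inj n : injective (@liftA K Q C n).
Proof.
elim: n => [|n IH] /=.
  by move=> v1 v2 E; apply: (Eqdep_dec.inj_pair2_eq_dec _ PeanoNat.Nat.eq_dec _ _ _ _ E).
move=> [v1|F1] [v2|F2] E.
- by rewrite (IH _ _ E).
- by have := liftA_idx v1; rewrite E /= ltnn.
- by have := liftA_idx v2; rewrite -E /= ltnn.
- by rewrite (Eqdep_dec.inj_pair2_eq_dec _ PeanoNat.Nat.eq_dec _ _ _ _ E).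
Qed.

Lemma liftA_src n (a : qA (QQ n)) : @qsrc TQ (liftA a) = liftV (qsrc a).
Proof. elim: n a => [|n IH] //; case=> [a|al] //=; exact: IH. Qed.

Lemma liftA_tgt n (a : qA (QQ n)) : @qtgt TQ (liftA a) = liftV (qtgt a).
Proof. elim: n a => [|n IH] //; case=> [a|al] //=; exact: IH. Qed.

Lemma fold_lift n (l : list (qA (QQ n))) v :
  fold_left (fun _ a => @qtgt TQ a) (map (@liftA K Q C n) l) (liftV v) =
  liftV (fold_left (fun _ a => qtgt a) l v).
Proof. elim: l v => //= a l IH v; rewrite -IH; congr (fold_left _ _ _); exact: liftA_tgt. Qed.

Lemma ptgt_liftP n (p : rpath (QQ n)) : ptgt (liftP p) = liftV (ptgt p).
Proof. exact: fold_lift. Qed.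

Lemma validl_lift n (l : list (qA (QQ n))) v :
  @validl TQ (liftV v) (map (@liftA K Q C n) l) <-> validl v l.
Proof.
elim: l v => [|a l IH] v; first by [].
change ((@qsrc TQ (liftA a) = liftV v /\ @validl TQ (@qtgt TQ (liftA a)) (map (@liftA K Q C n) l)) <-> (qsrc a = v /\ validl (qtgt a) l)).
rewrite liftA_tgt IH liftA_src; split; case=> E H; split => //.
  exact: liftV_inj E.
by rewrite E.
Qed.

Lemma liftP_inj n : injective (@liftP K Q C n).
Proof.
move=> [v1 l1] [v2 l2] [/liftV_inj -> E]; congr pair.
elim: l1 l2 E => [|a l1 IH] [|b l2] //= [/liftA_inj -> /IH ->] //.
Qed.

Lemma liftf_img n (x : vec K (QQ n)) p : liftf x (liftP p) = x p.
Proof.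
rewrite /liftf; case: excluded_middle_informative => [H|H]; last by exfalso; apply: H; exists p.
by case: constructive_indefinite_description => r /= /liftP_inj ->.
Qed.

Lemma liftf_nimg n (x : vec K (QQ n)) p : ~ (exists r : rpath (QQ n), p = liftP r) -> liftf x p = 0.
Proof. by rewrite /liftf; case: excluded_middle_informative. Qed.

Lemma liftf_supp n (x : vec K (QQ n)) p : liftf x p <> 0 -> exists r : rpath (QQ n), p = liftP r /\ x r <> 0.
Proof.
move=> H; have [[r Er]|Hn] := classic (exists r : rpath (QQ n), p = liftP r).
  by exists r; split => //; rewrite -(liftf_img x r) -Er.
by exfalso; apply: H; apply: liftf_nimg.
Qed.

Lemma liftf_comb n (y : vec K (QQ n)) cl : (forall p, y p = \sum_(z <- cl) z.1 * z.2 p) ->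
  forall p, liftf y p = \sum_(z <- cl) z.1 * liftf z.2 p.
Proof.
move=> E p; have [[r ->]|Hn] := classic (exists r : rpath (QQ n), p = liftP r).
  by rewrite liftf_img E; apply: eq_bigr => z _; rewrite liftf_img.
rewrite liftf_nimg // big1 // => z _; rewrite liftf_nimg // mulr0 //.
Qed.

Lemma liftf_inspan n (G : list (vec K (QQ n))) y : inspan G y -> inspan (map (@liftf K Q C n) G) (liftf y).
Proof.
move=> [cl [Hcl E]]; exists (map (fun z => (z.1, liftf z.2)) cl); split.
  by move=> z /in_map_iff [z' [<- /Hcl Hz]] /=; apply: in_map.
by move=> p; rewrite (liftf_comb E) big_map.
Qed.

Lemma liftf_valid n (x : vec K (QQ n)) : (forall p, x p <> 0 -> valid p) ->
  forall p, liftf x p <> 0 -> valid p.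
Proof.
move=> Hv p /liftf_supp [r [-> Hr]]; rewrite /valid /=; apply/validl_lift; exact: Hv.
Qed.

Lemma lift_col n (x : vec K (QQ n)) p : (forall p, x p <> 0 -> valid p) ->
  (fun a2 => delta (liftf x) a2 (liftP p)) = liftf (fun a => delta x a p).
Proof.
move=> Hv; apply: functional_extensionality => a2.
rewrite (delta_E _ _ (liftf_valid Hv)).
have [[a ->]|Hn] := classic (exists a : rpath (QQ n), a2 = liftP a).
  rewrite liftf_img (delta_E _ _ Hv) ptgt_liftP.
  have -> : ((liftP a).1, (liftP a).2 ++ (liftP p).2) = liftP (a.1, a.2 ++ p.2) by rewrite /liftP /= map_app.
  rewrite liftf_img.
  case: excluded_middle_informative => [E|N]; case: excluded_middle_informative => [E'|N'] //.
    by exfalso; apply: N'; apply: liftV_inj.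
  by exfalso; apply: N; rewrite E'.
rewrite (liftf_nimg _ Hn).
case: excluded_middle_informative => [Hc|] //=; clear Hc; apply: liftf_nimg => -[r Er].
apply: Hn; exists (r.1, firstn (length a2.2) r.2).
case: a2 Er => [a1 a2'] /= [E1 E2]; rewrite /liftP /= -E1; congr pair.
by rewrite -firstn_map -E2 firstn_len_app.
Qed.

Lemma pullback n (J : vec K TQ -> Prop) : right_coideal (@TC K Q C) J ->
  right_coideal (DD n) (fun w => DD n w /\ J (liftf w)).
Proof.
move=> [[J0 [Ja Js]] [_ Jt]].
have [[D0 [Da Ds]] [Dpc [Dc Dr]]] := stage_good n.
have HS : subspace (fun w => DD n w /\ J (liftf w)).
  split; first split => //.
    have -> : liftf (@vzero K (QQ n)) = @vzero K TQ by apply: functional_extensionality => p; rewrite (liftf_comb (cl:=[::])) => [|q]; rewrite big_nil.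
    exact: J0.
  split.
    move=> x y [Dx Jx] [Dy Jy]; split; first exact: Da.
    have -> : liftf (vadd x y) = vadd (liftf x) (liftf y).
      apply: functional_extensionality => p; rewrite /vadd (liftf_comb (cl:=[:: (1, x); (1, y)])).
        by rewrite !big_cons big_nil /= !mul1r addr0.
      by move=> q; rewrite !big_cons big_nil /= !mul1r addr0.
    exact: Ja.
  move=> c x [Dx Jx]; split; first exact: Ds.
  have -> : liftf (vscale c x) = vscale c (liftf x).
    apply: functional_extensionality => p; rewrite /vscale (liftf_comb (cl:=[:: (c, x)])).
      by rewrite !big_cons big_nil /= addr0.
    by move=> q; rewrite !big_cons big_nil /= addr0.
  exact: Js.
split => //; split; first by move=> x [].
move=> w [Dw Jw].
have [[S HSw] Hv] := Dpc w Dw.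
apply: (tensor_of HS (proj1 (stage_good n)) (delta_rowfin HSw)).
  move=> p; split; first exact: Dc.
  rewrite -lift_col //; exact: (tensor_cols (conj J0 (conj Ja Js)) (Jt _ Jw)).
by move=> q; apply: Dr.
Qed.

End TowerLemmas.


Section Final.
Variable K : fieldType.
Variable Q : quiver.
Variable C : vec K Q -> Prop.
Hypothesis HC : subcoalgebra C.

Local Notation TT := (@T K Q C).
Local Notation DD n := (sD (TT n)).
Local Notation QQ n := (sQ (TT n)).
Local Notation TQ := (@TQ K Q C).

Lemma lift_embf n (x : vec K (QQ n)) :
  @liftf K Q C n.+1 (@embf K (QQ n) (DD n) x) = liftf x.
Proof.
apply: functional_extensionality => p.
have Hi : forall r : rpath (QQ n), @liftP K Q C n.+1 (@piota K (QQ n) (DD n) r) = liftP r.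
  by move=> r; rewrite /liftP /piota /= map_map.
have [[r ->]|Hn] := classic (exists r : rpath (QQ n), p = liftP r).
  by rewrite liftf_img -Hi (liftf_img (n:=n.+1)) embf_iota.
rewrite (liftf_nimg _ Hn).
apply/eqP/negPn/negP => /eqP /liftf_supp [p' [Ep /embf_supp [r [Er _]]]].
by apply: Hn; exists r; rewrite Ep Er Hi.
Qed.

Lemma stepA n (F : fidx (DD n)) f (h : fset F f) (J : vec K TQ -> Prop) :
  right_coideal (@TC K Q C) J -> J (@liftf K Q C n.+1 (qF F)) -> J (liftf f).
Proof.
move=> HJ Jq.
have [HS' [_ Ht']] := pullback HC n.+1 HJ.
have Dq : DD n.+1 (qF F).
  by move=> E HE HSE; apply: HSE; right; exists F.
have Hgood := stage_good HC n.
have Hqv : forall p, qF F p <> 0 -> valid p.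
  by case: (qF_pc F (proj1 (proj2 Hgood))).
pose al := AIdx h.
pose b : rpath (QQ n.+1) := (inl (aidx_src al), [:: inr al]).
have [_ Jc] := tensor_cols HS' (Ht' _ (conj Dq Jq)) b.
have Ecol : (fun a => delta (qF F) a b) = @embf K (QQ n) (DD n) f.
  apply: functional_extensionality => a.
  rewrite (delta_E _ _ Hqv).
  have Eq : qF F (a.1, a.2 ++ [:: inr al]) = @embf K (QQ n) (DD n) f a.
    rewrite /qF /= rev_unit.
    case: excluded_middle_informative => [E0|N] /=; last by exfalso; apply: N.
    by rewrite rev_involutive.
  case: excluded_middle_informative => [E1|N] //=.
  have [E0|Hne] := eqVneq (@embf K (QQ n) (DD n) f a) 0; first by rewrite E0.
  exfalso; move/eqP: Hne => /embf_supp [r [Er Hr]].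
  apply: N; rewrite Er ptgt_iota /psrc /=; congr inl.
  exact: (mp_tgt_spec _ Hr).
rewrite Ecol lift_embf in Jc; exact: Jc.
Qed.

Lemma up k m (x : vec K (QQ m)) : multipath (DD m) x ->
  exists y : vec K (QQ (k + m)), multipath (DD (k + m)) y /\ liftf y = liftf x.
Proof.
move=> Hx; elim: k => [|k [y [Hy Ey]]]; first by exists x.
exists (@embf K (QQ (k + m)) (DD (k + m)) y); split.
  exact: (embf_mp Hy).
by rewrite lift_embf Ey.
Qed.

Lemma lift_list m (M : list (vec K (QQ m))) n : (m <= n)%N ->
  (forall g, In g M -> multipath (DD m) g) ->
  exists M' : list (vec K (QQ n)), (forall g, In g M' -> multipath (DD n) g) /\
    map (@liftf K Q C n) M' = map (@liftf K Q C m) M.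
Proof.
move=> Hmn; rewrite -(subnK Hmn).
elim: M => [|g M IH] HM; first by exists [::].
have [M' [HM' EM']] := IH (fun g' Hg' => HM g' (or_intror Hg')).
have [y [Hy Ey]] := up (n - m) (HM g (or_introl erefl)).
exists (y :: M'); split; first by move=> g' [<-|/HM'].
by rewrite /= Ey EM'.
Qed.

Lemma filter_lt (A : Type) (f : A -> bool) (l : list A) y :
  In y l -> f y = false -> (length (List.filter f l) < length l)%N.
Proof.
elim: l => [|a l IH] //= [->|Hy] Hf.
  rewrite Hf ltnS; apply/leP; exact: filter_length_le.
case: (f a) => /=; first by rewrite ltnS; apply: IH.
by apply: ltn_trans (IH Hy Hf) _.
Qed.

Lemma reduce n (G1 : list (vec K (QQ n))) : (forall g, In g G1 -> DD n g) ->
  exists G, (forall x, In x G -> In x G1) /\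
    (forall x y, In x G -> In y G -> gen_rcoideal (DD n) x y -> y = x) /\
    forall J, right_coideal (@TC K Q C) J -> (forall g, In g G -> J (liftf g)) ->
      forall g, In g G1 -> J (liftf g).
Proof.
have [k Hk] : exists k, (length G1 <= k)%N by exists (length G1).
elim: k G1 Hk => [|k IH] G1 Hk HD.
  case: G1 Hk HD => // _ _; exists [::]; split => //.
have [[x [y [Hx [Hy [Nxy Hg]]]]]|Hno] :=
  classic (exists x y, In x G1 /\ In y G1 /\ y <> x /\ gen_rcoideal (DD n) x y).
  pose f := fun z => if excluded_middle_informative (z = y) then false else true.
  pose G1' := List.filter f G1.
  have Hf : forall z, In z G1' <-> In z G1 /\ z <> y.
    move=> z; rewrite /G1' filter_In /f; case: excluded_middle_informative => [E|N] /=.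
      by split; case=> // _ /(_ E).
    by split; case.
  have Hlt : (length G1' < length G1)%N.
    by apply: (filter_lt Hy); rewrite /f; case: excluded_middle_informative.
  have Hlt' : (length G1' <= k)%N by rewrite -ltnS; exact: leq_trans Hlt Hk.
  have [G2 [HG2 [HG2i HG2c]]] := IH G1' Hlt' (fun g Hg => HD g (proj1 (proj1 (Hf g) Hg))).
  exists G2; split; first by move=> z /HG2 /Hf [].
  split => // J HJ HJG g Hgg.
  have HG1' := HG2c J HJ HJG.
  have [Eg|Ng] := classic (g = y); last by apply: HG1'; apply/Hf; split.
  subst g.
  have Jx : J (liftf x) by apply: HG1'; apply/Hf; split => //; move=> E; apply: Nxy; rewrite E.
  have := Hg _ (pullback HC n HJ) (conj (HD x Hx) Jx); case => _; exact.
exists G1; split => //; split => // x y Hx Hy Hg.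
by apply: NNPP => N; apply: Hno; exists x, y.
Qed.

End Final.


Theorem proposition4p25 (K : fieldType) (Q : quiver) (C : vec K Q -> Prop)
  (HC : @subcoalgebra K Q C)
  (I : vec K (@TQ K Q C) -> Prop)
  (HI : @right_coideal K (@TQ K Q C) (@TC K Q C) I)
  (Hfin : @finite_dim K (@TQ K Q C) I) :
  exists (n : nat) (F : @fidx K (sQ (@T K Q C n)) (sD (@T K Q C n))),
    forall y, I y ->
      @gen_rcoideal K (@TQ K Q C) (@TC K Q C)
        (@liftf K Q C n.+1 (@qF K (sQ (@T K Q C n)) (sD (@T K Q C n)) F)) y.
Proof.
case: Hfin => B HB.
have [L [HL HLs]] := span_extract (proj1 HI) HB.
have Hcollect : exists n (M : list (vec K (sQ (T C n)))),
    (forall g, In g M -> multipath (sD (T C n)) g) /\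
    forall l, In l L -> inspan (map (@liftf K Q C n) M) l.
  clear HLs; elim: L HL => [|l L IH] HL.
    by exists 0%N, [::]; split.
  have [n1 [M1 [HM1 HMs1]]] := IH (fun x Hx => HL x (or_intror Hx)).
  have Il : I l := HL l (or_introl erefl).
  have [m [x [Dx El]]] := proj1 (proj2 HI) l Il.
  have Hgood := stage_good HC m.
  have [[S HS] _] := proj1 (proj2 Hgood) x Dx.
  have [G [HG HGs]] := decompose Hgood Dx HS.
  have [M1' [HM1' EM1]] := lift_list (leq_maxl n1 m) HM1.
  have [G' [HG' EG]] := lift_list (leq_maxr n1 m) HG.
  exists (maxn n1 m), (M1' ++ G'); split.
    by move=> g Hg; case: (in_app_or _ _ _ Hg) => [/HM1'|/HG'].
  move=> l' [<-|Hl'].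
    rewrite El; apply: (inspan_incl _ (liftf_inspan HGs)) => g Hg.
    by rewrite map_app EG; apply: in_or_app; right.
  apply: (inspan_incl _ (HMs1 l' Hl')) => g Hg.
  by rewrite map_app EM1; apply: in_or_app; left.
have [n [M [HM HMs]]] := Hcollect.
have [G1 [HG1a [HG1b HG1c]]] := indep_extract M.
have HDG1 : forall g, In g G1 -> sD (T C n) g := fun g Hg => proj1 (HM g (HG1a g Hg)).
have [G [HGa [HGc HGcov]]] := reduce HC HDG1.
have Hind : independent (sD (T C n)) (fun x => In x G).
  split; first by move=> x /HGa /HG1a /HM.
  split; last exact: HGc.
  by move=> l Hnd Hl Hs; apply: HG1b => // z /Hl /HGa.
pose F := @FIdx K (sQ (T C n)) (sD (T C n)) (fun x => In x G) (ex_intro _ G (fun x Hx => Hx)) Hind.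
exists n, F => y Iy J HJ Jq.
have JG : forall g, In g G -> J (liftf g).
  by move=> g Hg; apply: (@stepA K Q C HC n F g Hg J HJ Jq).
have JG1 := HGcov J HJ JG.
have JS : subspace J := proj1 HJ.
have JM : forall g, In g M -> J (liftf g).
  move=> g Hg; apply: (sub_inspan JS _ (liftf_inspan (HG1c g Hg))).
  by move=> h /in_map_iff [g' [<- Hg']]; apply: JG1.
have JL : forall l, In l L -> J l.
  move=> l Hl; apply: (sub_inspan JS _ (HMs l Hl)).
  by move=> h /in_map_iff [g' [<- Hg']]; apply: JM.
exact: (sub_inspan JS JL (HLs y Iy)).
Qed.
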